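(* Let $q\in L_2(0,\pi)$ be real valued, $h,H\in\mathbb R$, $\omega=\frac12\int_0^\pi q(t)\,dt$, and suppose $0$ is an eigenvalue of the problem $-y''+q(x)y=\rho^2y$ on $(0,\pi)$, $y'(0)-hy(0)=0$, $y'(\pi)+Hy(\pi)=0$. Let $\varphi(\rho,x)$ be the solution with $\varphi(\rho,0)=1$, $\varphi'(\rho,0)=h$, with NSBF coefficients $g_n(x)$, $\gamma_n(x)$ (see context), and put $h_n:=\gamma_n(\pi)+Hg_n(\pi)$, $n\ge0$. Then $$h+H+\omega=-h_0,$$ and the characteristic function $\Phi(\rho):=\varphi'(\rho,\pi)+H\varphi(\rho,\pi)$ satisfies, for all $\rho\in\mathbb C$, $$\Phi(\rho)=-\rho\sin(\rho\pi)+h_0\left(\mathbf j_0(\rho\pi)-\cos(\rho\pi)\right)+\sum_{n=1}^\infty(-1)^nh_n\mathbf j_{2n}(\rho\pi).$$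
   Context: $\mathbf j_k$ denotes the spherical Bessel function of the first kind of order $k$; $\mathbf j_0(z)=\sin z/z$. It is known (Kravchenko–Navarro–Torba) that $\varphi(\rho,x)=\cos(\rho x)+\sum_{n=0}^\infty(-1)^ng_n(x)\mathbf j_{2n}(\rho x)$ and $\varphi'(\rho,x)=-\rho\sin(\rho x)+\left(h+\frac12\int_0^xq(t)dt\right)\cos(\rho x)+\sum_{n=0}^\infty(-1)^n\gamma_n(x)\mathbf j_{2n}(\rho x)$, with $\rho$-independent coefficients, both series converging for every $\rho\in\mathbb C$, where $g_0(x)=\varphi(0,x)-1$ and $\gamma_0(x)=g_0'(x)-h-\frac12\int_0^xq(t)dt$. *)

(* Defs.v *)
From HB Require Import structures.
From mathcomp Require Import all_boot all_order all_algebra.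
From mathcomp Require Import all_classical all_reals all_analysis.
From mathcomp Require Import complex.
Set Implicit Arguments. Unset Strict Implicit. Unset Printing Implicit Defensive.
Import Order.TTheory GRing.Theory Num.Theory.
Import numFieldNormedType.Exports.
Local Open Scope classical_set_scope.
Local Open Scope ring_scope.
Local Open Scope complex_scope.

Section Defs.
Variable R : realType.
Local Notation C := R[i].
Local Notation mu := (@lebesgue_measure R).

Definition coshR (b : R) : R := (expR b + expR (- b)) / 2.
Definition sinhR (b : R) : R := (expR b - expR (- b)) / 2.

Definition ccos (z : C) : C :=
  (cos (complex.Re z) * coshR (complex.Im z)) +i* (- (sin (complex.Re z) * sinhR (complex.Im z))).
Definition csin (z : C) : C :=
  (sin (complex.Re z) * coshR (complex.Im z)) +i* (cos (complex.Re z) * sinhR (complex.Im z)).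

(* spherical Bessel functions of the first kind, via
   j_0 z = sin z / z, j_1 z = sin z / z^2 - cos z / z,
   j_(k+2) z = (2k+3)/z j_(k+1) z - j_k z   (z <> 0),
   extended by continuity at z = 0: j_0 0 = 1, j_k 0 = 0 for k >= 1. *)
Definition sph_j0 (z : C) : C := if z == 0 then 1 else csin z / z.
Definition sph_j1 (z : C) : C :=
  if z == 0 then 0 else csin z / z ^+ 2 - ccos z / z.
Fixpoint sph_pair (k : nat) (z : C) : C * C :=
  match k with
  | 0%N => (sph_j0 z, sph_j1 z)
  | k'.+1 => let: (a, b) := sph_pair k' z in
      (b, if z == 0 then 0 else (2 * k'%:R + 3) / z * b - a)
  end.
Definition sph_j (k : nat) (z : C) : C := (sph_pair k z).1.

Definition ccvg (s : nat -> C) (l : C) : Prop :=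
  (fun n => complex.Re (s n)) @ \oo --> complex.Re l /\ (fun n => complex.Im (s n)) @ \oo --> complex.Im l.
Definition cseries (a : nat -> C) (l : C) : Prop :=
  ccvg (fun N => \sum_(0 <= n < N) a n) l.

Definition cintegrable (a b : R) (f : R -> C) : Prop :=
  mu.-integrable `[a, b] (fun t => (complex.Re (f t))%:E) /\
  mu.-integrable `[a, b] (fun t => (complex.Im (f t))%:E).
Definition cint (a b : R) (f : R -> C) : C :=
  (Rintegral mu `[a, b] (fun t => complex.Re (f t))) +i*
  (Rintegral mu `[a, b] (fun t => complex.Im (f t))).

Definition L2_0pi (q : R -> R) : Prop :=
  measurable_fun `[0, pi] q /\
  (\int[mu]_(x in `[0%R, pi]) ((q x) ^+ 2)%:E < +oo)%E.

(* phi (rho, .), with derivative dphi (rho, .), is the (Caratheodory) solution of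
   -y'' + q y = rho^2 y on [0, pi], y(0) = 1, y'(0) = h:
   phi and dphi are absolutely continuous, phi' = dphi, dphi' = (q - rho^2) phi a.e. *)
Definition is_phi (q : R -> R) (h : R) (phi dphi : C -> R -> C) : Prop :=
  forall (rho : C) (x : R), 0 <= x <= pi ->
    cintegrable 0 x (fun t => ((q t)%:C - rho ^+ 2) * phi rho t) /\
    dphi rho x = h%:C + cint 0 x (fun t => ((q t)%:C - rho ^+ 2) * phi rho t) /\
    cintegrable 0 x (dphi rho) /\
    phi rho x = 1 + cint 0 x (dphi rho).

(* 0 is an eigenvalue of -y'' + q y = rho^2 y, y'(0) - h y(0) = 0,
   y'(pi) + H y(pi) = 0 : there is a nontrivial (Caratheodory) solution y,
   with derivative dy, of -y'' + q y = 0 satisfying both boundary conditions. *)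
Definition zero_is_eigenvalue (q : R -> R) (h H : R) : Prop :=
  exists y dy : R -> R,
    (forall x, 0 <= x <= pi ->
       mu.-integrable `[0, x] (fun t => (q t * y t)%:E) /\
       dy x = dy 0 + Rintegral mu `[0, x] (fun t => q t * y t) /\
       mu.-integrable `[0, x] (fun t => (dy t)%:E) /\
       y x = y 0 + Rintegral mu `[0, x] dy) /\
    (exists x, 0 <= x <= pi /\ y x != 0) /\
    dy 0 - h * y 0 = 0 /\
    dy pi + H * y pi = 0.

(* NSBF representations of phi and phi' (the "known" facts of the context),
   with coefficients g n, gam n : R -> R *)
Definition NSBF_coeffs (q : R -> R) (h : R) (phi dphi : C -> R -> C)
    (g gam : nat -> R -> R) : Prop :=
  (forall (rho : C) (x : R), 0 <= x <= pi ->
     cseries (fun n => ((-1) ^+ n * g n x)%:C * sph_j (2 * n) (rho * x%:C))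
             (phi rho x - ccos (rho * x%:C))) /\
  (forall (rho : C) (x : R), 0 <= x <= pi ->
     cseries (fun n => ((-1) ^+ n * gam n x)%:C * sph_j (2 * n) (rho * x%:C))
             (dphi rho x + rho * csin (rho * x%:C)
              - (h + Rintegral mu `[0, x] q / 2)%:C * ccos (rho * x%:C))) /\
  (forall x, 0 <= x <= pi -> (g 0%N x)%:C = phi 0 x - 1) /\
  (forall x, 0 < x < pi ->
     gam 0%N x = derive1 (g 0%N) x - h - Rintegral mu `[0, x] q / 2).

End Defs.

(* Main.v *)
Require Import Defs.
From HB Require Import structures.
From mathcomp Require Import all_boot all_order all_algebra.
From mathcomp Require Import all_classical all_reals all_analysis.
From mathcomp Require Import complex.
From mathcomp Require Import ring lra.
From mathcomp Require Import measurable_realfun.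
Import Order.TTheory GRing.Theory Num.Theory.
Import numFieldNormedType.Exports.

Section Uniq.
Import Num.Def.
Local Open Scope classical_set_scope.
Local Open Scope ring_scope.
Context {R : realType}.
Local Notation mu := (@lebesgue_measure R).

Lemma mu_itvoc (a t : R) : a <= t -> mu `]a, t] = (t - a)%:E.
Proof.
move=> at_; rewrite lebesgue_measure_itv /=.
case: ltP => //=.
rewrite lee_fin => H; have -> : t = a by apply/le_anti; rewrite at_ H.
by rewrite subrr.
Qed.

Lemma partA (f : R -> R) (a t : R) : 0 <= a -> a <= t ->
  mu.-integrable `[0, t] (EFin \o f) ->
  (forall r, 0 <= r <= a -> f r = 0) ->
  ((`| Rintegral mu `[0, t] f |)%:E <= \int[mu]_(x in `]a, t]) (`|f x|)%:E)%E.
Proof.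
move=> a0 at_ itf f0.
have -> : Rintegral mu `[0, t] f = Rintegral mu `]a, t] f.
  rewrite -(@Rintegral_itvB _ f (BLeft 0) (BRight t) a itf) ?bnd_simp //.
  have -> : Rintegral mu `[0, a] f = Rintegral mu `[0, a] (fun _ => 0).
    by apply: eq_Rintegral => r; rewrite inE /= in_itv /= => /f0.
  by rewrite Rintegral_cst // mul0r subr0.
rewrite EFin_normr_Rintegral //; last first.
  apply: integrableS itf => //.
  by apply: subset_itvr; rewrite bnd_simp.
apply: le_trans (le_abse_integral _ _ _) _ => //.
  apply: measurable_funS (measurable_int _ itf) => //.
  by apply: subset_itvr; rewrite bnd_simp.
Qed.


Lemma partB (g : R -> R) (c a t : R) : a <= t ->
  measurable_fun `]a, t] g ->
  (forall r, a < r <= t -> `|g r| <= c) ->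
  (\int[mu]_(x in `]a, t]) (`|g x|)%:E <= (c * (t - a))%:E)%E.
Proof.
move=> at_ mg gc.
have H1 : (\int[mu]_(x in `]a, t]) (`|g x|)%:E <= \int[mu]_(x in `]a, t]) (cst c%:E) x)%E.
  apply: ge0_le_integral => //.
  - apply/measurable_EFinP; apply: measurableT_comp => //.
apply: (le_trans H1).
by rewrite integral_cst //= mu_itvoc.
Qed.

Lemma partC (q z : R -> R) (b a t M k Q : R) : 0 <= a -> a <= t -> t <= b ->
  0 <= M -> 0 < k ->
  measurable_fun `[0, b] q -> measurable_fun `]a, t] (fun x => q x * z x) ->
  (\int[mu]_(x in `[0%R, b]) ((q x) ^+ 2)%:E = Q%:E)%E ->
  (forall r, a < r <= t -> `|z r| <= M) ->
  (\int[mu]_(x in `]a, t]) (`|q x * z x|)%:E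
     <= (M * k / 2 * Q + M / (2 * k) * (t - a))%:E)%E.
Proof.
move=> a0 at_ tb M0 k0 mq mz hQ zM.
have sab : `]a, t] `<=` `[0, b].
  by apply: subset_itv; rewrite bnd_simp.
have mq' : measurable_fun `]a, t] q by apply: measurable_funS mq.
have H1 : (\int[mu]_(x in `]a, t]) (`|q x * z x|)%:E <= \int[mu]_(x in `]a, t])
   ((M * k / 2)%:E * ((q x) ^+ 2)%:E + (M / (2 * k))%:E))%E.
  apply: ge0_le_integral => //.
  - apply/measurable_EFinP; apply: measurableT_comp => //.
  - apply: emeasurable_funD.
      apply: emeasurable_funM => //; apply/measurable_EFinP.
      exact: measurable_funX.
    exact: measurable_cst.
  - move=> r; rewrite /= in_itv /= => /zM zr.
    rewrite -EFinM -EFinD lee_fin normrM.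
    apply: (le_trans (_ : _ <= `|q r| * M)); first by apply: ler_wpM2l.
    have k0' : k != 0 by rewrite gt_eqF.
    have sq : q r ^+ 2 = `|q r| ^+ 2 by rewrite real_normK ?num_real.
    rewrite sq.
    have e : M * k / 2 * `|q r| ^+ 2 + M / (2 * k) - `|q r| * M
             = M / (2 * k) * (k * `|q r| - 1) ^+ 2 by field.
    rewrite -subr_ge0 e; apply: mulr_ge0; last exact: sqr_ge0.
    by apply: divr_ge0 => //; apply: mulr_ge0 => //; apply: ltW.
apply: (le_trans H1).
have Mk0 : 0 <= M * k / 2 by apply: divr_ge0 => //; apply: mulr_ge0 => //; apply: ltW.
have Mk1 : 0 <= M / (2 * k) by apply: divr_ge0 => //; apply: mulr_ge0 => //; apply: ltW.
have mq2 : measurable_fun `[0, b] (fun x => (q x ^+ 2)%:E).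
  by apply/measurable_EFinP; exact: measurable_funX.
have HJ : (\int[mu]_(x in `]a, t]) (q x ^+ 2)%:E <= Q%:E)%E.
  rewrite -hQ; apply: ge0_subset_integral => //.
  by move=> x _; rewrite lee_fin sqr_ge0.
rewrite ge0_integralD //; last 2 first.
- by move=> x _; rewrite -EFinM lee_fin mulr_ge0 // sqr_ge0.
- apply: emeasurable_funM => //; apply: measurable_funS mq2 => //.
rewrite ge0_integralZl_EFin //; last 2 first.
- by move=> x _; rewrite lee_fin sqr_ge0.
- by apply: measurable_funS mq2.
rewrite integral_cst //= mu_itvoc // -EFinM [leRHS]EFinD [in leRHS]EFinM.
apply: leeD => //.
by apply: lee_wpmul2l => //; rewrite lee_fin.
Qed.

Lemma Rsub (f : R -> R) (t b : R) : 0 <= t -> t <= b ->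
  mu.-integrable `[0, b] (EFin \o f) ->
  Rintegral mu `[0, t] (fun x => `|f x|) <= Rintegral mu `[0, b] (fun x => `|f x|).
Proof.
move=> t0 tb itf.
have itn := integrable_norm itf.
have sab : `[0, t] `<=` `[0, b] by apply: subset_itv; rewrite bnd_simp.
have itn' : mu.-integrable `[0, t] (EFin \o (Num.Def.normr \o f)).
  by apply: integrableS itn.
rewrite /Rintegral fine_le //; try by apply: integrable_fin_num.
apply: ge0_subset_integral => //.
exact: measurable_int itn.
Qed.

Definition sol (q z dz : R -> R) (b : R) := forall x, 0 <= x <= b ->
  mu.-integrable `[0, x] (fun t => (q t * z t)%:E) /\
  dz x = Rintegral mu `[0, x] (fun t => q t * z t) /\
  mu.-integrable `[0, x] (fun t => (dz t)%:E) /\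
  z x = Rintegral mu `[0, x] dz.

Lemma step (q z dz : R -> R) (b a d Q k : R) :
  measurable_fun `[0, b] q ->
  (\int[mu]_(x in `[0%R, b]) ((q x) ^+ 2)%:E = Q%:E)%E ->
  sol q z dz b -> 0 < k -> 0 < d ->
  d + k / 2 * Q + d / (2 * k) <= 1 / 2 ->
  0 <= a -> a <= b ->
  (forall r, 0 <= r <= a -> z r = 0 /\ dz r = 0) ->
  forall t, 0 <= t <= minr (a + d) b -> z t = 0 /\ dz t = 0.
Proof.
move=> mq hQ hs k0 d0 hc a0 ab hz.
set u := minr (a + d) b.
have ub : u <= b by rewrite /u ge_min lexx orbT.
have ud : u <= a + d by rewrite /u ge_min lexx.
have au : a <= u by rewrite /u le_min ab andbT; lra.
have u0 : 0 <= u by apply: le_trans au.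
have b0 : 0 <= b by apply: le_trans ub.
have [iqb [_ [idb _]]] := hs b (andb_true_intro (conj b0 (lexx b))).
set B := Rintegral mu `[0, b] (fun x => `|dz x|) +
         Rintegral mu `[0, b] (fun x => `|q x * z x|).
have hB : forall t, 0 <= t <= b -> `|z t| + `|dz t| <= B.
  move=> t /andP[t0 tb].
  have [_ [-> [_ ->]]] := hs t (andb_true_intro (conj t0 tb)).
  have [iqt [_ [idt _]]] := hs t (andb_true_intro (conj t0 tb)).
  apply: lerD.
    apply: le_trans (le_normr_Rintegral _ _) _ => //.
    by apply: Rsub.
  apply: le_trans (le_normr_Rintegral _ _) _ => //.
  by apply: (Rsub (fun x => q x * z x)).
set S := [set x | exists t, 0 <= t <= u /\ x = `|z t| + `|dz t|].
have S0 : S (`|z 0| + `|dz 0|) by exists 0; rewrite lexx u0.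
have hS : has_sup S.
  split; first by exists (`|z 0| + `|dz 0|).
  exists B => x [t [/andP[t0 tu] ->]].
  by apply: hB; rewrite t0 (le_trans tu ub).
set M := sup S.
have inS : forall t, 0 <= t <= u -> `|z t| + `|dz t| <= M.
  by move=> t tu; apply: sup_upper_bound => //; exists t.
have M0 : 0 <= M by apply: le_trans (inS 0 _); rewrite ?lexx ?u0 //.
have key : forall t, 0 <= t <= u -> `|z t| + `|dz t| <= M / 2.
  move=> t /andP[t0 tu].
  have [ta|at_] := leP t a.
    have [-> ->] := hz t (andb_true_intro (conj t0 ta)).
    by rewrite normr0 addr0 divr_ge0.
  have tb : t <= b by apply: le_trans ub.
  have [iqt [dzt [idt zt]]] := hs t (andb_true_intro (conj t0 tb)).
  have bnd : forall r, a < r <= t -> `|z r| <= M /\ `|dz r| <= M.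
    move=> r /andP[ar rt].
    have := inS r _.
    have r0 : 0 <= r by lra.
    have ru : r <= u by lra.
    move=> /(_ (andb_true_intro (conj r0 ru))) H.
    by split; apply: le_trans _ H; [rewrite lerDl | rewrite lerDr].
  have sub : `]a, t] `<=` `[0, t] by apply: subset_itv; rewrite bnd_simp //; lra.
  have H1 : ((`|z t|)%:E <= (M * (t - a))%:E)%E.
    rewrite zt; apply: (le_trans (partA dz a t a0 (ltW at_) idt _)).
      by move=> r /(hz r) [].
    apply: partB; first exact: ltW.
      apply/measurable_EFinP; apply: measurable_funS (measurable_int _ idt) => //.
    by move=> r /bnd [].
  have H2 : ((`|dz t|)%:E <= (M * k / 2 * Q + M / (2 * k) * (t - a))%:E)%E.
    rewrite dzt; apply: (le_trans (partA (fun x => q x * z x) a t a0 (ltW at_) iqt _)).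
      by move=> r /(hz r) [->]; rewrite mulr0.
    apply: (partC q z b a t M k Q) => //; first exact: ltW.
    + apply/measurable_EFinP; apply: measurable_funS (measurable_int _ iqt) => //.
    + by move=> r /bnd [].
  rewrite !lee_fin in H1 H2.
  have e1 : M * (t - a) <= M * d by apply: ler_wpM2l => //; lra.
  have e2 : M / (2 * k) * (t - a) <= M / (2 * k) * d.
    apply: ler_wpM2l; last by lra.
    by apply: divr_ge0 => //; apply: mulr_ge0 => //; apply: ltW.
  have e3 : M * d + (M * k / 2 * Q + M / (2 * k) * d) = M * (d + k / 2 * Q + d / (2 * k)).
    by field; rewrite gt_eqF.
  have e4 : M * (d + k / 2 * Q + d / (2 * k)) <= M * (1 / 2) by apply: ler_wpM2l.
  lra.
have MM : M <= M / 2.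
  apply: ge_sup; first by exists (`|z 0| + `|dz 0|).
  by move=> x [t [tu ->]]; apply: key.
have M0' : M <= 0 by lra.
move=> t tu.
have := inS t tu.
move=> H; have hz0 : `|z t| + `|dz t| <= 0 by apply: le_trans H M0'.
have n1 := normr_ge0 (z t); have n2 := normr_ge0 (dz t).
split; apply/eqP; rewrite -normr_eq0 eq_le normr_ge0 andbT; lra.
Qed.

Lemma uniq (q z dz : R -> R) (b : R) :
  measurable_fun `[0, b] q ->
  (\int[mu]_(x in `[0%R, b]) ((q x) ^+ 2)%:E < +oo)%E ->
  sol q z dz b ->
  forall x, 0 <= x <= b -> z x = 0 /\ dz x = 0.
Proof.
move=> mq hq hs.
set Q := fine (\int[mu]_(x in `[0%R, b]) ((q x) ^+ 2)%:E).
have i0 : (0 <= \int[mu]_(x in `[0%R, b]) ((q x) ^+ 2)%:E)%E.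
  by apply: integral_ge0 => x _; rewrite lee_fin sqr_ge0.
have hQ : (\int[mu]_(x in `[0%R, b]) ((q x) ^+ 2)%:E = Q%:E)%E.
  by rewrite /Q fineK // ge0_fin_numE.
have Q0 : 0 <= Q by rewrite /Q fine_ge0.
set k := 1 / (2 * Q + 2).
set d := 1 / (4 * (Q + 2)).
have k0 : 0 < k by rewrite /k divr_gt0 //; lra.
have d0 : 0 < d by rewrite /d divr_gt0 //; lra.
have hc : d + k / 2 * Q + d / (2 * k) <= 1 / 2.
  have e : d + k / 2 * Q + d / (2 * k) = 1 / 2 - 1 / (4 * (Q + 1)).
    rewrite /d /k; field.
    by apply/and3P; split; apply/negP => /eqP; lra.
  rewrite e lerBlDr lerDl divr_ge0 //; lra.
move=> x /andP[x0 xb].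
have b0 : 0 <= b by apply: le_trans xb.
have ind : forall n : nat, forall r, 0 <= r <= minr (n%:R * d) b -> z r = 0 /\ dz r = 0.
  elim=> [|n IH] r.
    rewrite mul0r (min_l b0) => /andP[r0 r00].
    have -> : r = 0 by apply/le_anti; rewrite r0 r00.
    have [_ [-> [_ ->]]] := hs 0 (andb_true_intro (conj (lexx 0) b0)).
    by rewrite set_itv1 !Rintegral_set1.
  move=> /andP[r0 rn].
  have a0 : 0 <= minr (n%:R * d) b by rewrite le_min b0 andbT mulr_ge0 // ltW.
  have ab : minr (n%:R * d) b <= b by rewrite ge_min lexx orbT.
  apply: (step _ _ _ _ _ _ _ _ mq hQ hs k0 d0 hc a0 ab IH).
  rewrite r0 /=.
  move: rn; rewrite !le_min => /andP[r1 r2]; rewrite r2 andbT.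
  have r1' : r <= n%:R * d + d by move: r1; rewrite -natr1 mulrDl mul1r.
  have [h|h] := leP (n%:R * d) b.
    have e2 : n%:R * d <= minr (n%:R * d) b by rewrite le_min lexx h.
    lra.
  have e2 : b <= minr (n%:R * d) b by rewrite le_min lexx (ltW h).
  lra.
have hb : 0 <= b / d by rewrite divr_ge0 // ltW.
have := archi_boundP hb.
set N := Num.Def.archi_bound (b / d) => hn.
apply: (ind N).
rewrite x0 /= le_min xb andbT.
apply: le_trans (ltW _) ; first exact: xb.
by rewrite -ltr_pdivrMr.
Qed.

End Uniq.

Section Ser.
Local Open Scope classical_set_scope.
Local Open Scope ring_scope.
Local Open Scope complex_scope.
Context {R : realType}.
Local Notation C := R[i].

Lemma sph_pairE k : sph_pair k (0 : C) = if k is 0 then (1, 0) else (0, 0).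
Proof.
elim: k => [|k IH]; first by rewrite /= /sph_j0 /sph_j1 eqxx.
by rewrite /= IH eqxx; case: k {IH}.
Qed.

Lemma sph_pair0 k : sph_pair k.+1 (0 : C) = (0, 0).
Proof. by rewrite sph_pairE. Qed.

Lemma sph_j00 : sph_j 0 (0 : C) = 1.
Proof. by rewrite /sph_j /= /sph_j0 eqxx. Qed.

Lemma sph_jS0 k : sph_j k.+1 (0 : C) = 0.
Proof. by rewrite /sph_j sph_pair0. Qed.

Lemma ccos0 : ccos (0 : C) = 1.
Proof.
rewrite /ccos /= sin0 cos0 /coshR /sinhR oppr0 expR0 mul0r oppr0 mul1r.
by apply/eqP; rewrite eq_complex /= eqxx andbT; apply/eqP; field.
Qed.

Lemma ccvg_ext (s t : nat -> C) l : (forall n, s n = t n) -> ccvg s l -> ccvg t l.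
Proof. by move=> e; have -> : s = t by apply: funext. Qed.

Lemma ccvg_uniq (s : nat -> C) l c : ccvg s l -> (\forall n \near \oo, s n = c) -> l = c.
Proof.
move=> [hr hi] hc.
have hr' : (fun n => complex.Re (s n)) @ \oo --> complex.Re c.
  by apply: cvg_near_cst; move: hc; apply: filterS => n ->.
have hi' : (fun n => complex.Im (s n)) @ \oo --> complex.Im c.
  by apply: cvg_near_cst; move: hc; apply: filterS => n ->.
have e1 : complex.Re l = complex.Re c.
  by rewrite -(cvg_lim _ hr) // (cvg_lim _ hr').
have e2 : complex.Im l = complex.Im c.
  by rewrite -(cvg_lim _ hi) // (cvg_lim _ hi').
move: e1 e2; clear hr hi hr' hi' hc.
by case: l => a b; case: c => c d /= -> ->.
Qed.

Lemma ReMC (c : R) (m : C) : complex.Re (c%:C * m) = c * complex.Re m.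
Proof. by case: m => ? ? /=; rewrite mul0r subr0. Qed.

Lemma ImMC (c : R) (m : C) : complex.Im (c%:C * m) = c * complex.Im m.
Proof. by case: m => ? ? /=; rewrite mul0r addr0. Qed.

Lemma ReD (x y : C) : complex.Re (x + y) = complex.Re x + complex.Re y.
Proof. by case: x => ? ?; case: y. Qed.
Lemma ImD (x y : C) : complex.Im (x + y) = complex.Im x + complex.Im y.
Proof. by case: x => ? ?; case: y. Qed.
Lemma ReB (x y : C) : complex.Re (x - y) = complex.Re x - complex.Re y.
Proof. by case: x => ? ?; case: y. Qed.
Lemma ImB (x y : C) : complex.Im (x - y) = complex.Im x - complex.Im y.
Proof. by case: x => ? ?; case: y. Qed.

Lemma ccvg_addZ (s t : nat -> C) l m (c : R) : ccvg s l -> ccvg t m ->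
  ccvg (fun n => s n + c%:C * t n) (l + c%:C * m).
Proof.
move=> [hr hi] [hr' hi']; split.
- have -> : (fun n => complex.Re (s n + c%:C * t n)) =
            (fun n => complex.Re (s n) + c * complex.Re (t n)).
    by apply: funext => n; rewrite ReD ReMC.
  have -> : complex.Re (l + c%:C * m) = complex.Re l + c * complex.Re m.
    by rewrite ReD ReMC.
  by apply: cvgD => //; apply: cvgMr.
- have -> : (fun n => complex.Im (s n + c%:C * t n)) =
            (fun n => complex.Im (s n) + c * complex.Im (t n)).
    by apply: funext => n; rewrite ImD ImMC.
  have -> : complex.Im (l + c%:C * m) = complex.Im l + c * complex.Im m.
    by rewrite ImD ImMC.
  by apply: cvgD => //; apply: cvgMr.
Qed.

Lemma ccvg_shift (s : nat -> C) l a : ccvg s l ->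
  ccvg (fun n => s n.+1 - a) (l - a).
Proof.
move=> [hr hi]; split.
- have -> : (fun n => complex.Re (s n.+1 - a)) = (fun n => complex.Re (s n.+1) - complex.Re a).
    by apply: funext => n; rewrite ReB.
  rewrite ReB; apply: cvgB; last exact: cvg_cst.
  by rewrite (cvg_shiftS (fun n => complex.Re (s n))).
- have -> : (fun n => complex.Im (s n.+1 - a)) = (fun n => complex.Im (s n.+1) - complex.Im a).
    by apply: funext => n; rewrite ImB.
  rewrite ImB; apply: cvgB; last exact: cvg_cst.
  by rewrite (cvg_shiftS (fun n => complex.Im (s n))).
Qed.

End Ser.

Section Main.
Local Open Scope classical_set_scope.
Local Open Scope ring_scope.
Local Open Scope complex_scope.
Context {R : realType}.
Local Notation mu := (@lebesgue_measure R).

Lemma phi_re (q : R -> R) h (phi dphi : R[i] -> R -> R[i]) :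
  is_phi q h phi dphi -> forall x, 0 <= x <= pi ->
  mu.-integrable `[0, x] (fun t => (q t * complex.Re (phi 0 t))%:E) /\
  complex.Re (dphi 0 x) = h + Rintegral mu `[0, x] (fun t => q t * complex.Re (phi 0 t)) /\
  mu.-integrable `[0, x] (fun t => (complex.Re (dphi 0 t))%:E) /\
  complex.Re (phi 0 x) = 1 + Rintegral mu `[0, x] (fun t => complex.Re (dphi 0 t)).
Proof.
move=> hp x hx; have [[i1 i2] [e1 [[i3 i4] e2]]] := hp 0 x hx.
have fe : (fun t => complex.Re (((q t)%:C - 0 ^+ 2) * phi 0 t)) =
          (fun t => q t * complex.Re (phi 0 t)).
  by apply: funext => t; rewrite expr2 mul0r subr0 ReMC.
have fe' : (fun t => (complex.Re (((q t)%:C - 0 ^+ 2) * phi 0 t))%:E) =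
          (fun t => (q t * complex.Re (phi 0 t))%:E).
  by apply: funext => t; rewrite expr2 mul0r subr0 ReMC.
split; first by move: i1; rewrite fe'.
split; first by rewrite e1 ReD /cint /= fe.
split => //.
by rewrite e2 ReD /cint /=.
Qed.

Lemma phi_im (q : R -> R) h (phi dphi : R[i] -> R -> R[i]) :
  is_phi q h phi dphi ->
  sol q (fun t => complex.Im (phi 0 t)) (fun t => complex.Im (dphi 0 t)) pi.
Proof.
move=> hp x hx; have [[i1 i2] [e1 [[i3 i4] e2]]] := hp 0 x hx.
have fe : (fun t => complex.Im (((q t)%:C - 0 ^+ 2) * phi 0 t)) =
          (fun t => q t * complex.Im (phi 0 t)).
  by apply: funext => t; rewrite expr2 mul0r subr0 ImMC.
have fe' : (fun t => (complex.Im (((q t)%:C - 0 ^+ 2) * phi 0 t))%:E) =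
          (fun t => (q t * complex.Im (phi 0 t))%:E).
  by apply: funext => t; rewrite expr2 mul0r subr0 ImMC.
split; first by move: i2; rewrite fe'.
split; first by rewrite e1 ImD /cint /= fe add0r.
split => //.
by rewrite e2 ImD /cint /= add0r.
Qed.

Lemma intZ (D : set R) (f : R -> R) (c : R) : measurable D ->
  mu.-integrable D (EFin \o f) -> mu.-integrable D (EFin \o (fun t => c * f t)).
Proof.
move=> mD i; have -> : EFin \o (fun t => c * f t) = (fun t => (c%:E * (EFin \o f) t)%E).
  by apply: funext => t /=; rewrite EFinM.
exact: integrableZl.
Qed.

Lemma eig (q u du y dy : R -> R) (h H : R) :
  measurable_fun `[0, pi] q ->
  (\int[mu]_(x in `[0%R, pi]) ((q x) ^+ 2)%:E < +oo)%E ->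
  (forall x, 0 <= x <= pi ->
    mu.-integrable `[0, x] (fun t => (q t * u t)%:E) /\
    du x = h + Rintegral mu `[0, x] (fun t => q t * u t) /\
    mu.-integrable `[0, x] (fun t => (du t)%:E) /\
    u x = 1 + Rintegral mu `[0, x] du) ->
  (forall x, 0 <= x <= pi ->
    mu.-integrable `[0, x] (fun t => (q t * y t)%:E) /\
    dy x = dy 0 + Rintegral mu `[0, x] (fun t => q t * y t) /\
    mu.-integrable `[0, x] (fun t => (dy t)%:E) /\
    y x = y 0 + Rintegral mu `[0, x] dy) ->
  (exists x, 0 <= x <= pi /\ y x != 0) ->
  dy 0 - h * y 0 = 0 -> dy pi + H * y pi = 0 ->
  du pi + H * u pi = 0.
Proof.
move=> mq hq hu hy [x0 [hx0 yx0]] bc0 bcpi.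
have pi0 : 0 <= (pi : R) := ltW (pi_gt0 R).
have hpi : 0 <= (pi : R) <= pi by rewrite pi0 lexx.
have edy : dy 0 = h * y 0 by apply/eqP; rewrite -subr_eq0 bc0.
have [y0|y0] := eqVneq (y 0) 0.
  exfalso.
  have hs : sol q y dy pi.
    move=> x hx; have [i1 [e1 [i2 e2]]] := hy x hx.
    split => //; split; first by rewrite e1 edy y0 mulr0 add0r.
    by split => //; rewrite e2 y0 add0r.
  have [e _] := uniq _ _ _ _ mq hq hs _ hx0.
  by move: yx0; rewrite e eqxx.
pose z := fun x => y 0 * u x - y x.
pose dz := fun x => y 0 * du x - dy x.
have hs : sol q z dz pi.
  move=> x hx.
  have [i1 [e1 [i2 e2]]] := hu x hx.
  have [j1 [f1 [j2 f2]]] := hy x hx.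
  have mD : measurable (`[0, x] : set R) by exact: measurable_itv.
  have I1 : mu.-integrable `[0, x] (fun t => (q t * z t)%:E).
    have -> : (fun t => (q t * z t)%:E) =
      (fun t => ((EFin \o (fun t => y 0%R * (q t * u t))%R) t - (q t * y t)%:E)%E).
      by apply: funext => t; rewrite /z /= -EFinB; congr EFin; ring.
    by apply: integrableB => //; apply: intZ.
  have I2 : mu.-integrable `[0, x] (fun t => (dz t)%:E).
    have -> : (fun t => (dz t)%:E) =
      (fun t => ((EFin \o (fun t => y 0%R * du t)%R) t - (dy t)%:E)%E).
      by apply: funext => t; rewrite /dz /= -EFinB.
    by apply: integrableB => //; apply: intZ.
  split => //; split.
    rewrite /dz e1 f1.
    have -> : Rintegral mu `[0, x] (fun t => q t * z t) =
       Rintegral mu `[0, x] (fun t => y 0 * (q t * u t) - q t * y t).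
      by apply: eq_Rintegral => t _; rewrite /z; ring.
    rewrite RintegralB //; last exact: intZ.
    rewrite RintegralZl // edy; ring.
  split => //.
  rewrite /z e2 f2.
  have -> : Rintegral mu `[0, x] dz =
     Rintegral mu `[0, x] (fun t => y 0 * du t - dy t) by [].
  rewrite RintegralB //; last exact: intZ.
  rewrite RintegralZl //; ring.
have [zp dzp] := uniq _ _ _ _ mq hq hs _ hpi.
rewrite /z /dz in zp dzp.
have e1 : y pi = y 0 * u pi by lra.
have e2 : dy pi = y 0 * du pi by lra.
rewrite e1 e2 in bcpi.
have E : y 0 * (du pi + H * u pi) = y 0 * du pi + H * (y 0 * u pi) by ring.
have : y 0 * (du pi + H * u pi) = 0 by rewrite E.
by move/eqP; rewrite mulf_eq0 (negbTE y0) /= => /eqP.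
Qed.

End Main.

Local Open Scope ring_scope.
Local Open Scope complex_scope.

Theorem mainTheorem4 (R : realType) (q : R -> R) (h H : R)
    (phi dphi : R[i] -> R -> R[i]) (g gam : nat -> R -> R) :
  L2_0pi q ->
  zero_is_eigenvalue q h H ->
  is_phi q h phi dphi ->
  NSBF_coeffs q h phi dphi g gam ->
  let omega := Rintegral (@lebesgue_measure R) `[0, pi] q / 2 in
  let hn := fun n : nat => gam n pi + H * g n pi in
  let Phi := fun rho : R[i] => dphi rho pi + H%:C * phi rho pi in
  h + H + omega = - hn 0%N /\
  (forall rho : R[i],
     cseries (fun n => ((-1) ^+ n.+1 * hn n.+1)%:C * sph_j (2 * n.+1) (rho * pi%:C))
       (Phi rho + rho * csin (rho * pi%:C)
        - (hn 0%N)%:C * (sph_j 0 (rho * pi%:C) - ccos (rho * pi%:C)))).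
Proof.
move=> [mq hq] [y [dy [hy [hnt [bc0 bcpi]]]]] hphi [ns1 [ns2 [ns3 _]]] omega hn Phi.
have pi0 : 0 <= (pi : R) := ltW (pi_gt0 R).
have hpi : 0 <= (pi : R) <= pi by rewrite pi0 lexx.
have reP : complex.Re (dphi 0 pi) + H * complex.Re (phi 0 pi) = 0.
  exact: (eig _ _ _ _ _ _ _ mq hq (phi_re _ _ _ _ hphi) hy hnt bc0 bcpi).
have imP : complex.Im (dphi 0 pi) + H * complex.Im (phi 0 pi) = 0.
  have [a b] := uniq _ _ _ _ mq hq (phi_im _ _ _ _ hphi) _ hpi.
  by rewrite /= in a b; rewrite a b mulr0 addr0.
have G : dphi 0 pi - (h + omega)%:C = (gam 0%N pi)%:C.
  have := ns2 0 pi hpi.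
  rewrite !mul0r ccos0 mulr1 addr0 => S.
  rewrite /omega; apply: (ccvg_uniq _ _ _ S).
  exists 1%N => // N /= hN.
  case: N hN => // N _.
  rewrite big_nat_recl // big1 => [|n _].
    by rewrite addr0 muln0 sph_j00 expr0 mul1r mulr1.
  by rewrite mulnS addSn sph_jS0 mulr0.
have Gr : complex.Re (dphi 0 pi) - (h + omega) = gam 0%N pi.
  by have := congr1 (@complex.Re R) G; rewrite ReB.
have Fg : g 0%N pi = complex.Re (phi 0 pi) - 1.
  by have := congr1 (@complex.Re R) (ns3 pi hpi); rewrite ReB.
have hn0 : h + H + omega = - hn 0%N by rewrite /hn Fg -Gr; nra.
split => // rho.
pose F := fun n : nat => ((-1) ^+ n * hn n)%:C * sph_j (2 * n) (rho * pi%:C).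
have S := ccvg_addZ _ _ _ _ H (ns2 rho pi hpi) (ns1 rho pi hpi).
rewrite /cseries.
apply: (ccvg_ext (fun N => \sum_(0 <= n < N.+1) F n - F 0%N)).
  by move=> N; rewrite big_nat_recl // addrC addKr.
have -> : Phi rho + rho * csin (rho * pi%:C)
    - (hn 0%N)%:C * (sph_j 0 (rho * pi%:C) - ccos (rho * pi%:C)) =
  (dphi rho pi + rho * csin (rho * pi%:C) - (h + omega)%:C * ccos (rho * pi%:C)
   + H%:C * (phi rho pi - ccos (rho * pi%:C))) - F 0%N.
  have e : h + omega = - hn 0%N - H by lra.
  rewrite e /F /Phi expr0 mul1r muln0 rmorphB rmorphN.
  ring.
apply: (ccvg_shift (fun N => \sum_(0 <= n < N) F n)).
move: S; apply: ccvg_ext => N.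
rewrite mulr_sumr -big_split /=; apply: eq_bigr => n _.
rewrite /F /hn !(rmorphM, rmorphD).
ring.
Qed.
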